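(* Let $\Omega\subset\mathbb{R}^d$ be a closed $\eta$-prox-regular set for some $\eta>0$. Then the map $\Omega\times\mathbb{R}^d\ni(x,v)\mapsto|P_x(v)|^2$ is lower semicontinuous, and for each fixed $x\in\Omega$ the map $\mathbb{R}^d\ni v\mapsto|P_x(v)|^2$ is convex.
   Context: For closed $S$, $P_S(y)$ is the set of nearest points of $S$ to $y$; the proximal normal cone is $N^P(S,x)=\{v:\exists\alpha>0,\ x\in P_S(x+\alpha v)\}$; $S$ is $\eta$-prox-regular if for every $x\in\partial S$ and $v\in N^P(S,x)$ with $|v|=1$, $B_\eta(x+\eta v)\cap S=\emptyset$ (open ball). The Clarke tangent cone $T(\Omega,x)$ is the set of $v$ such that for all $t_n\searrow0$ and $x_n\in\Omega$ with $x_n\to x$ there exist $v_n\to v$ with $x_n+t_nv_n\in\Omega$; it is a closed convex cone, and $P_x(v)$ denotes the unique nearest point of $T(\Omega,x)$ to $v$. *)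

(* Defs.v *)
(* R^d is modelled as 'rV[R]_d (R : realType) with
   its library topology (equivalent to the Euclidean one); the Euclidean norm
   is defined explicitly below. *)
From HB Require Import structures.
From mathcomp Require Import all_boot all_order all_algebra.
From mathcomp Require Import all_classical all_reals all_analysis.
Set Implicit Arguments. Unset Strict Implicit. Unset Printing Implicit Defensive.
Import Order.TTheory GRing.Theory Num.Theory.
Import numFieldNormedType.Exports.
Local Open Scope classical_set_scope.
Local Open Scope ring_scope.

Section Defs.
Variables (R : realType) (d : nat).
Notation V := 'rV[R]_d.

Definition enorm2 (v : V) : R := \sum_(i < d) (v ord0 i) ^+ 2.
Definition enorm (v : V) : R := Num.sqrt (enorm2 v).

Definition nearest (S : set V) (y p : V) : Prop :=
  S p /\ forall z, S z -> enorm (y - p) <= enorm (y - z).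

Definition prox_normal (S : set V) (x : V) : set V :=
  [set v | exists2 a : R, 0 < a & nearest S (x + a *: v) x].

Definition eball (c : V) (r : R) : set V := [set y | enorm (y - c) < r].

Definition boundary (S : set V) : set V := closure S `\` interior S.

Definition prox_regular (S : set V) (eta : R) : Prop :=
  forall x v, boundary S x -> prox_normal S x v -> enorm v = 1 ->
    eball (x + eta *: v) eta `&` S = set0.

Definition clarke_tangent (Om : set V) (x : V) : set V :=
  [set v | forall (t : R^nat) (xs : nat -> V),
     (forall n, 0 < t n) -> (forall n, t n.+1 <= t n) -> t @ \oo --> 0 ->
     (forall n, Om (xs n)) -> xs @ \oo --> x ->
     exists vs : nat -> V, vs @ \oo --> v /\ forall n, Om (xs n + t n *: vs n)].

(* P_x(v): the (unique) nearest point of T(Omega,x) to v *)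
Definition proj_tangent (Om : set V) (x v : V) : V :=
  xget 0 [set p | nearest (clarke_tangent Om x) v p].

Definition lsc_on (T : topologicalType) (D : set T) (f : T -> R) : Prop :=
  forall z, D z -> forall a : R, a < f z ->
    exists2 W, nbhs z W & forall y, W y -> D y -> a < f y.

Definition convex_fun (f : V -> R) : Prop :=
  forall (u w : V) (t : R), 0 <= t <= 1 ->
    f (t *: u + (1 - t) *: w) <= t * f u + (1 - t) * f w.
End Defs.

(* Main.v *)
Require Import Defs.
From HB Require Import structures.
From mathcomp Require Import all_boot all_order all_algebra.
From mathcomp Require Import all_classical all_reals all_analysis.
From mathcomp Require Import ring lra.
Import Order.TTheory GRing.Theory Num.Theory.
Import numFieldNormedType.Exports.
Set Implicit Arguments. Unset Strict Implicit. Unset Printing Implicit Defensive.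
Local Open Scope classical_set_scope.
Local Open Scope ring_scope.

Ltac veq := apply/rowP => i; rewrite !mxE; ring.

Section Eucl.
Variables (R : realType) (d : nat).
Local Notation V := 'rV[R]_d.
Local Notation en := (@enorm R d).
Local Notation en2 := (@enorm2 R d).

Definition dot (u v : V) : R := \sum_(i < d) u ord0 i * v ord0 i.

Lemma dotC u v : dot u v = dot v u.
Proof. by rewrite /dot; apply: eq_bigr => i _; rewrite mulrC. Qed.
Lemma dotDl u v w : dot (u + v) w = dot u w + dot v w.
Proof. by rewrite /dot -big_split; apply: eq_bigr => i _; rewrite !mxE mulrDl. Qed.
Lemma dotNl u v : dot (- u) v = - dot u v.
Proof. by rewrite /dot -sumrN; apply: eq_bigr => i _; rewrite !mxE mulNr. Qed.
Lemma dotZl a u v : dot (a *: u) v = a * dot u v.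
Proof. by rewrite /dot mulr_sumr; apply: eq_bigr => i _; rewrite !mxE mulrA. Qed.
Lemma dotBl u v w : dot (u - v) w = dot u w - dot v w.
Proof. by rewrite dotDl dotNl. Qed.
Lemma dotDr u v w : dot w (u + v) = dot w u + dot w v.
Proof. by rewrite dotC dotDl !(dotC w). Qed.
Lemma dotNr u v : dot v (- u) = - dot v u.
Proof. by rewrite dotC dotNl dotC. Qed.
Lemma dotZr a u v : dot v (a *: u) = a * dot v u.
Proof. by rewrite dotC dotZl dotC. Qed.
Lemma dotBr u v w : dot w (u - v) = dot w u - dot w v.
Proof. by rewrite dotDr dotNr. Qed.
Lemma dot0l v : dot 0 v = 0.
Proof. by rewrite /dot big1 // => i _; rewrite mxE mul0r. Qed.
Lemma dot0r v : dot v 0 = 0.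
Proof. by rewrite dotC dot0l. Qed.

Lemma en2_dot v : en2 v = dot v v.
Proof. by rewrite /enorm2 /dot; apply: eq_bigr => i _; rewrite expr2. Qed.
Lemma en2_ge0 v : 0 <= en2 v.
Proof. by apply: sumr_ge0 => i _; apply: sqr_ge0. Qed.
Lemma en_ge0 v : 0 <= en v.
Proof. exact: sqrtr_ge0. Qed.
Lemma en_sq v : en v ^+ 2 = en2 v.
Proof. exact: sqr_sqrtr (en2_ge0 v). Qed.
Lemma en_sqd v : en v * en v = dot v v.
Proof. by rewrite -expr2 en_sq en2_dot. Qed.

Lemma en2_eq0 v : en2 v = 0 -> v = 0.
Proof.
move=> /eqP; rewrite psumr_eq0 => [/allP H|i _]; last exact: sqr_ge0.
apply/rowP => i; rewrite [RHS]mxE.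
by have /implyP/(_ isT) := H i (mem_index_enum i); rewrite sqrf_eq0 => /eqP.
Qed.
Lemma en_eq0 v : en v = 0 -> v = 0.
Proof. by move=> h; apply: en2_eq0; rewrite -en_sq h expr0n. Qed.
Lemma en0 : en 0 = 0.
Proof. by rewrite /enorm /enorm2 big1 ?sqrtr0 // => i _; rewrite mxE expr0n. Qed.

Lemma dot_lin a b u v w : dot (a *: u + b *: v) w = a * dot u w + b * dot v w.
Proof. by rewrite dotDl !dotZl. Qed.

Lemma en2_lin a b u v :
  dot (a *: u + b *: v) (a *: u + b *: v) =
  a ^+ 2 * dot u u + 2 * a * b * dot u v + b ^+ 2 * dot v v.
Proof. rewrite !dotDl !dotDr !dotZl !dotZr (dotC v u); ring. Qed.

Lemma sq_le_nonneg (a b : R) : 0 <= b -> a ^+ 2 <= b ^+ 2 -> a <= b.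
Proof. by move=> hb h; nra. Qed.

Lemma CS u v : dot u v <= en u * en v.
Proof.
have [h0|hpos] := eqVneq (dot v v) 0.
  have -> : v = 0 by apply: en2_eq0; rewrite en2_dot.
  by rewrite dot0r en0 mulr0.
have m0 : 0 < dot v v by rewrite lt_def hpos -en2_dot en2_ge0.
have H := en2_ge0 (dot v v *: u + (- dot u v) *: v).
rewrite en2_dot en2_lin in H.
apply: sq_le_nonneg; first by apply: mulr_ge0; apply: en_ge0.
rewrite exprMn !en_sq !en2_dot.
nra.
Qed.

Lemma enN v : en (- v) = en v.
Proof. by rewrite /enorm /enorm2; under eq_bigr do rewrite mxE sqrrN. Qed.

Lemma CSabs u v : `|dot u v| <= en u * en v.
Proof.
rewrite ler_norml CS andbT lerNl.
by have := CS (- u) v; rewrite dotNl enN.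
Qed.

Lemma en2Z a v : en2 (a *: v) = a ^+ 2 * en2 v.
Proof. by rewrite !en2_dot dotZl dotZr mulrA -expr2. Qed.
Lemma enZ a v : en (a *: v) = `|a| * en v.
Proof. by rewrite /enorm -/(en2 _) en2Z sqrtrM ?sqr_ge0 // sqrtr_sqr. Qed.
Lemma enB u v : en (u - v) = en (v - u).
Proof. by rewrite -enN opprB. Qed.

Lemma en_triangle u v : en (u + v) <= en u + en v.
Proof.
apply: sq_le_nonneg; first by apply: addr_ge0; apply: en_ge0.
rewrite en_sq en2_dot dotDl !dotDr (dotC v u) -!en_sqd.
have := CS u v; nra.
Qed.
Lemma en_tri3 u v w : en (u - w) <= en (u - v) + en (v - w).
Proof. by have := en_triangle (u - v) (v - w); rewrite addrA subrK. Qed.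
Lemma en_lip u v : `|en u - en v| <= en (u - v).
Proof.
rewrite ler_norml; apply/andP; split.
  by have := en_triangle (v - u) u; rewrite subrK enB; lra.
by have := en_triangle (u - v) v; rewrite subrK; lra.
Qed.

Lemma enorm_expand u v : en2 (u - v) = en2 u - 2 * dot u v + en2 v.
Proof. rewrite !en2_dot dotBl !dotBr (dotC v u); ring. Qed.
Lemma enorm_expandD u v : en2 (u + v) = en2 u + 2 * dot u v + en2 v.
Proof. rewrite !en2_dot dotDl !dotDr (dotC v u); ring. Qed.

Lemma en_le_en2 u v : (en u <= en v) = (en2 u <= en2 v).
Proof. by rewrite /enorm ler_sqrt // en2_ge0. Qed.
Lemma en_lt_en2 u v : (en u < en v) = (en2 u < en2 v).
Proof. by rewrite !ltNge en_le_en2. Qed.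

Lemma coord_le_en (v : V) j : `|v ord0 j| <= en v.
Proof.
rewrite -sqrtr_sqr /enorm ler_sqrt ?en2_ge0 // /enorm2 (bigD1 j) //= lerDl.
by apply: sumr_ge0 => i _; apply: sqr_ge0.
Qed.

Lemma mxn_le_en (v : V) : `|v| <= en v.
Proof.
rewrite [leLHS]/Num.norm /= mx_normrE; apply/bigmax_leP; split; first exact: en_ge0.
by move=> [i j] _ /=; rewrite ord1; apply: coord_le_en.
Qed.

Lemma coord_le_mxn (v : V) j : `|v ord0 j| <= `|v|.
Proof.
rewrite [leRHS]/Num.norm /= mx_normrE.
exact: (@le_bigmax _ _ _ 0 (fun ij => `|v ij.1 ij.2|) (ord0, j)).
Qed.

Definition kap : R := d%:R + 1.
Lemma kap_gt0 : 0 < kap.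
Proof. by rewrite /kap ltr_wpDl. Qed.

Lemma en_le_mxn (v : V) : en v <= kap * `|v|.
Proof.
apply: sq_le_nonneg; first by apply: mulr_ge0; [apply: ltW; apply: kap_gt0|apply: normr_ge0].
rewrite en_sq /enorm2.
have h1 : \sum_(i < d) v ord0 i ^+ 2 <= \sum_(i < d) `|v| ^+ 2.
  apply: ler_sum => i _; rewrite -(real_normK (num_real (v ord0 i))).
  have h := coord_le_mxn v i; have h0 := normr_ge0 (v ord0 i); nra.
rewrite sumr_const card_ord in h1.
apply: le_trans h1 _; rewrite exprMn /kap.
have hv : 0 <= `|v| ^+ 2 by apply: sqr_ge0.
have hd : (0:R) <= d%:R by [].
rewrite -mulr_natl; nra.
Qed.

Lemma nbhs_en (x : V) e : 0 < e -> nbhs x [set y | en (y - x) < e].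
Proof.
move=> e0; apply/nbhs_ballP; exists (e / kap); first by apply: divr_gt0 => //; apply: kap_gt0.
move=> y; rewrite -ball_normE /ball_ /= => h.
apply: le_lt_trans (en_le_mxn _) _.
by rewrite distrC -ltr_pdivlMl ?kap_gt0 // mulrC.
Qed.

Lemma cvg_en (u : nat -> V) (x : V) :
  (forall e, 0 < e -> \forall n \near \oo, en (u n - x) < e) -> u @ \oo --> x.
Proof.
move=> H; apply/cvgrPdist_lt => e e0.
by apply: filterS (H e e0) => n h; rewrite distrC; apply: le_lt_trans (mxn_le_en _) h.
Qed.

Lemma en_cvg (u : nat -> V) (x : V) :
  u @ \oo --> x -> forall e, 0 < e -> \forall n \near \oo, en (u n - x) < e.
Proof.
move/cvgrPdist_lt => H e e0.
have := H (e / kap); rewrite divr_gt0 ?kap_gt0 // => /(_ isT).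
apply: filterS => n h; apply: le_lt_trans (en_le_mxn _) _.
by rewrite distrC -ltr_pdivlMl ?kap_gt0 // mulrC.
Qed.

Lemma real_cvg0 (t : nat -> R) : t @ \oo --> 0 ->
  forall e, 0 < e -> \forall n \near \oo, t n < e.
Proof.
move/cvgrPdist_lt => H e e0; apply: filterS (H e e0) => n.
by rewrite sub0r normrN; apply: le_lt_trans (ler_norm _).
Qed.

Lemma closed_approx (S : set V) :
  (forall k, (forall e, 0 < e -> exists2 k', S k' & en (k' - k) < e) -> S k) ->
  closed S.
Proof.
move=> H k Hcl; apply: H => e e0.
by have [k' [Sk' Bk']] := Hcl _ (@nbhs_en k e e0); exists k'.
Qed.

Lemma en_continuous (v : V) : continuous (fun z : V => en (v - z)).
Proof.
move=> z; apply/(@cvgrPdist_lt _ _ _ (nbhs z)) => e e0.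
near=> y.
apply: le_lt_trans (en_lip _ _) _.
have -> : v - z - (v - y) = y - z by rewrite opprB addrC addrA subrK.
near: y; exact: (@nbhs_en z e e0).
Unshelve. all: by end_near.
Qed.

Lemma closed_sublevel (v : V) r : closed [set z : V | en (v - z) <= r].
Proof.
apply: closed_approx => k H; apply/ler_addgt0Pr => e e0.
have [k' hk' hk] := H e e0.
have := en_tri3 v k' k; rewrite /= in hk'; lra.
Qed.

Lemma nearest_ex (S : set V) (v z0 : V) : closed S -> S z0 -> exists p, nearest S v p.
Proof.
move=> cS Sz0.
pose r := en (v - z0).
pose A := S `&` [set z : V | en (v - z) <= r].
have cA : closed A by apply: closedI => //; apply: closed_sublevel.
have bA : \forall M \near +oo, forall z, A z -> `|z| <= M.
  near=> M => z [_ /= hz].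
  apply: le_trans (mxn_le_en _) _.
  have := en_triangle v (z - v); rewrite addrC subrK enB.
  suff : en v + r <= M by lra.
  near: M; apply: nbhs_pinfty_ge; exact: num_real.
have A0 : A !=set0 by exists z0; split => //=; rewrite /r.
have [p pA pmin] := @EVT_min_rV R d (fun z => en (v - z)) A A0
  (bounded_closed_compact bA cA) (continuous_subspaceT (@en_continuous v)).
rewrite inE in pA; case: pA => Sp hp.
exists p; split => // z Sz.
have [hz|hz] := leP (en (v - z)) r.
  by apply: pmin; rewrite inE.
by apply: le_trans (ltW hz); rewrite /= in hp.
Unshelve. all: by end_near.
Qed.

Lemma en2_en (v : V) : en2 v = en v * en v.
Proof. by rewrite -expr2 en_sq. Qed.

Lemma cone_nearest (K : set V) (w p : V) :
  (forall s k, 0 <= s -> K k -> K (s *: k)) -> nearest K w p ->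
  dot w p = dot p p.
Proof.
move=> Kc [Kp Hp].
have Hs s : 0 <= s -> dot (w - p) (w - p) <= dot (w - s *: p) (w - s *: p).
  by move=> s0; rewrite -!en2_dot -!en_le_en2; apply: Hp; apply: Kc.
set c := dot w p; set m := dot p p; set W := dot w w.
have E s : dot (w - s *: p) (w - s *: p) = W - 2 * s * c + s ^+ 2 * m.
  rewrite dotBl !dotBr !dotZl !dotZr (dotC p w) /c /m /W; ring.
have E1 : dot (w - p) (w - p) = W - 2 * c + m.
  rewrite dotBl !dotBr (dotC p w) /c /m /W; ring.
have H0 := Hs 0 (lexx 0); rewrite E E1 in H0.
have m0 : 0 <= m by rewrite /m -en2_dot en2_ge0.
have [m0'|mpos] := eqVneq m 0.
  have p0 : p = 0 by apply: en2_eq0; rewrite en2_dot.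
  by rewrite /c /m p0 dot0r dot0r.
have mgt : 0 < m by rewrite lt_def mpos m0.
have c0 : 0 <= c by nra.
have Hc := Hs (c / m) (divr_ge0 c0 m0); rewrite E E1 in Hc.
have : (W - 2 * c + m) * m <= (W - 2 * (c / m) * c + (c / m) ^+ 2 * m) * m.
  by apply: ler_wpM2r => //; apply: ltW.
have -> : (W - 2 * (c / m) * c + (c / m) ^+ 2 * m) * m = W * m - c * c.
  by field; rewrite mpos.
move=> h.
have h2 : (m - c) ^+ 2 <= 0 by nra.
have : (m - c) ^+ 2 == 0 by rewrite eq_le h2 sqr_ge0.
rewrite sqrf_eq0 => /eqP e; lra.
Qed.

Lemma cone_value (K : set V) (w p k : V) :
  (forall s k, 0 <= s -> K k -> K (s *: k)) -> nearest K w p -> K k ->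
  2 * dot w k - dot k k <= dot p p.
Proof.
move=> Kc np Kk; have E := @cone_nearest K w p Kc np.
case: np => _ Hp; have := Hp k Kk; rewrite en_le_en2 !en2_dot.
rewrite !dotBl !dotBr (dotC k w) (dotC p w) E; lra.
Qed.

Lemma convex_nearest (K : set V) (w p : V) :
  (forall s k, 0 <= s -> K k -> K (s *: k)) ->
  (forall k1 k2, K k1 -> K k2 -> K (k1 + k2)) ->
  nearest K w p -> forall n, K n -> dot (w - p) n <= 0.
Proof.
move=> Kc Ka [Kp Hp] n Kn.
rewrite leNgt; apply/negP => hc.
set c := dot (w - p) n in hc.
have [n0|npos] := eqVneq (dot n n) 0.
  have : n = 0 by apply: en2_eq0; rewrite en2_dot.
  by move=> e; move: hc; rewrite /c e dot0r ltxx.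
have m0 : 0 < dot n n by rewrite lt_def npos -en2_dot en2_ge0.
pose s := c / dot n n.
have Ks : K (p + s *: n) by apply: Ka => //; apply: Kc => //; rewrite divr_ge0 // ltW.
have := Hp _ Ks; rewrite en_le_en2 !en2_dot.
have -> : w - (p + s *: n) = (w - p) - s *: n by rewrite opprD addrA.
rewrite !dotBr !dotBl !dotZl !dotZr (dotC n w) (dotC n p).
have hcd : c = dot w n - dot p n by rewrite /c dotBl.
have -> : s * (s * dot n n) = s * c by rewrite /s; field; rewrite npos.
have sp : 0 < s by rewrite divr_gt0.
nra.
Qed.

Variables (Om : set V) (eta : R).
Variable eta_gt0 : 0 < eta.
Variable Om_closed : closed Om.
Variable Om_pr : prox_regular Om eta.

Definition NN (y : V) : set V :=
  [set n | forall y', Om y' -> 2 * eta * dot n (y' - y) <= en n * en2 (y' - y)].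
Definition Mc (y : V) : set V :=
  [set n | exists C, forall y', Om y' -> dot n (y' - y) <= C * en2 (y' - y)].
Definition Pol (y : V) : set V := [set k | forall n, NN y n -> dot n k <= 0].

Lemma NN0 y : NN y 0.
Proof. by move=> y' _; rewrite dot0l en0 mul0r mulr0. Qed.

Lemma NN_cone y s n : 0 <= s -> NN y n -> NN y (s *: n).
Proof.
move=> s0 Hn y' Oy'; rewrite dotZl enZ ger0_norm //.
have := Hn y' Oy'.
have := en2_ge0 (y' - y); have := en_ge0 n; nra.
Qed.

Lemma NN_Mc y n : NN y n -> Mc y n.
Proof.
move=> Hn; exists (en n / (2 * eta)) => y' Oy'.
have := Hn y' Oy'.
have e2 : 0 < 2 * eta by rewrite mulr_gt0.
move=> h; rewrite mulrAC ler_pdivlMr //; lra.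
Qed.

Lemma Mc_add y n1 n2 : Mc y n1 -> Mc y n2 -> Mc y (n1 + n2).
Proof.
move=> [C1 H1] [C2 H2]; exists (C1 + C2) => y' Oy'.
rewrite dotDl mulrDl; apply: lerD; [exact: H1|exact: H2].
Qed.

Lemma prox_Mc z t u : 0 < t -> nearest Om (z + t *: u) z -> Mc z u.
Proof.
move=> t0 [Oz Hz]; exists (2 * t)^-1 => y' Oy'.
have := Hz y' Oy'; rewrite en_le_en2 !en2_dot.
have -> : z + t *: u - z = t *: u by veq.
have -> : z + t *: u - y' = t *: u - (y' - z) by veq.
set a := y' - z; clearbody a.
rewrite dotBl !dotBr !dotZl !dotZr (dotC a u) => h.
rewrite mulrC ler_pdivlMr ?mulr_gt0 //; nra.
Qed.

Lemma en_gt0 n : n != 0 -> 0 < en n.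
Proof.
move=> nz; rewrite lt_def en_ge0 andbT; apply/eqP => h.
by move: nz; rewrite (en_eq0 h) eqxx.
Qed.

Lemma en_unit n : n != 0 -> en ((en n)^-1 *: n) = 1.
Proof.
move=> nz; have h := en_gt0 nz.
by rewrite enZ ger0_norm ?invr_ge0 ?ltW // mulVf // gt_eqF.
Qed.

Lemma en2_unit n : n != 0 -> en2 ((en n)^-1 *: n) = 1.
Proof. by move=> nz; rewrite -en_sq en_unit // expr1n. Qed.

Lemma Mc_NN y n : Om y -> Mc y n -> NN y n.
Proof.
move=> Oy [C HC].
have [->|nz] := eqVneq n 0; first exact: NN0.
have enp := en_gt0 nz.
pose C' := `|C| + 1.
have C'0 : 0 < C' by rewrite /C' ltr_wpDl.
have HC' : forall y', Om y' -> dot n (y' - y) <= C' * en2 (y' - y).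
  move=> y' Oy'; apply: le_trans (HC y' Oy') _; apply: ler_wpM2r; first exact: en2_ge0.
  by rewrite /C'; apply: le_trans (ler_norm C) _; rewrite lerDl.
have en2n : 0 < en2 n by rewrite -en_sq exprn_gt0.
have [intY|nintY] := pselect (interior Om y).
  exfalso; move: intY; rewrite /interior => /nbhs_ballP [r /= r0 Hr].
  pose s := Num.min (r / (2 * en n)) (1 / (2 * C')).
  have s0 : 0 < s by rewrite lt_min !divr_gt0 ?mulr_gt0.
  have s1 : s <= r / (2 * en n) by rewrite ge_min lexx.
  have s2 : s <= 1 / (2 * C') by rewrite ge_min lexx orbT.
  have Oys : Om (y + s *: n).
    apply: Hr; rewrite -ball_normE /ball_ /=.
    apply: le_lt_trans (mxn_le_en _) _.
    have -> : y - (y + s *: n) = (- s) *: n by veq.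
    rewrite enZ normrN ger0_norm ?ltW //.
    have : s * en n <= r / 2.
      by move: s1; rewrite ler_pdivlMr ?mulr_gt0 // => h; rewrite ler_pdivlMr //; lra.
    lra.
  have := HC' _ Oys.
  have -> : y + s *: n - y = s *: n by veq.
  rewrite dotZr en2Z -en2_dot => h.
  have h2 : 1 <= C' * s.
    have : s * en2 n * 1 <= s * en2 n * (C' * s) by lra.
    by rewrite ler_pM2l ?mulr_gt0.
  move: s2; rewrite ler_pdivlMr ?mulr_gt0 //; lra.
have bY : boundary Om y by split => //; apply: subset_closure.
set e := (en n)^-1 *: n.
have e1 : en e = 1 by apply: en_unit.
have e2 : en2 e = 1 by apply: en2_unit.
have dote b : dot e b = (en n)^-1 * dot n b by rewrite dotZl.
have pn : prox_normal Om y e.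
  exists (en n / (2 * C')); first by rewrite divr_gt0 ?mulr_gt0.
  split => // z Oz; rewrite en_le_en2 !en2_dot.
  set a := en n / (2 * C').
  have -> : y + a *: e - y = a *: e by veq.
  have -> : y + a *: e - z = a *: e - (z - y) by veq.
  have := HC' z Oz; set b := z - y; clearbody b => hb.
  rewrite dotBl !dotBr !dotZl !dotZr (dotC b n) -(en2_dot b).
  have ha : a * (en n)^-1 = (2 * C')^-1 by rewrite /a mulrAC mulfV ?gt_eqF // mul1r.
  have : 2 * a * ((en n)^-1 * dot n b) <= en2 b.
    rewrite mulrA -(mulrA 2) ha.
    have : dot n b / C' <= en2 b by rewrite ler_pdivrMr // mulrC.
    rewrite invfM mulrA mulfV // mul1r mulrC; lra.
  lra.
have Hb := Om_pr bY pn e1.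
move=> y' Oy'.
have : ~ (en (y' - (y + eta *: e)) < eta).
  move=> hlt; have : (eball (y + eta *: e) eta `&` Om) y' by split.
  by rewrite Hb.
move/negP; rewrite -leNgt => hle.
have : eta ^+ 2 <= en2 (y' - (y + eta *: e)).
  by rewrite -en_sq !expr2; apply: ler_pM => //; apply: ltW.
rewrite en2_dot.
have -> : y' - (y + eta *: e) = (y' - y) - eta *: e by veq.
set a := y' - y; clearbody a.
rewrite dotBl !dotBr !dotZl !dotZr (dotC a n) -(en2_dot a) => h.
have hnn : (en n)^-1 * ((en n)^-1 * dot n n) = 1.
  by rewrite -en_sqd; field; rewrite gt_eqF.
have : 2 * eta * ((en n)^-1 * dot n a) <= en2 a.
  have : eta * (eta * ((en n)^-1 * ((en n)^-1 * dot n n))) = eta ^+ 2 by rewrite hnn mulr1 expr2.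
  nra.
move=> h3; have := ler_wpM2l (en_ge0 n) h3.
have -> : en n * (2 * eta * ((en n)^-1 * dot n a)) = 2 * eta * dot n a.
  by field; rewrite gt_eqF.
done.
Qed.

Lemma NN_add y n1 n2 : Om y -> NN y n1 -> NN y n2 -> NN y (n1 + n2).
Proof. by move=> Oy h1 h2; apply: Mc_NN => //; apply: Mc_add; apply: NN_Mc. Qed.

Lemma dot_approx (k k' a : V) e : en (k' - k) < e -> dot k a <= dot k' a + e * en a.
Proof.
move=> h.
have -> : dot k a = dot k' a + dot (k - k') a by rewrite dotBl; ring.
have := CSabs (k - k') a; rewrite enB => h2.
have := ler_norm (dot (k - k') a).
have : en (k' - k) * en a <= e * en a by apply: ler_wpM2r; [apply: en_ge0|apply: ltW].
lra.
Qed.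

Lemma NN_closed y : closed (NN y).
Proof.
apply: closed_approx => k H y' Oy'; apply/ler_addgt0Pr => eps eps0.
set a := y' - y.
pose c := 2 * eta * en a + en2 a + 1.
have ha := en_ge0 a; have ha2 := en2_ge0 a.
have c0 : 0 < c. rewrite /c. have := eta_gt0. nra.
have [k' Nk' hk] := H (eps / c) (divr_gt0 eps0 c0).
have h1 := dot_approx a hk.
have h2 := Nk' y' Oy'; rewrite -/a in h2.
have h3 : en k' <= en k + eps / c.
  have := en_triangle (k' - k) k; rewrite subrK => ?; lra.
have h4 : en k' * en2 a <= (en k + eps / c) * en2 a by apply: ler_wpM2r => //; apply: en2_ge0.
have h5 : eps / c * c = eps by field; rewrite gt_eqF.
have he : 0 < eps / c by apply: divr_gt0.
rewrite /c in h5.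
have e2 : 0 <= 2 * eta by have := eta_gt0; lra.
have h1' := ler_wpM2l e2 h1.
move: h1' h4 h5 h2 he; set e' := eps / c; clearbody e' => h1' h4 h5 h2 he.
nra.
Qed.

Lemma Pol_closed y : closed (Pol y).
Proof.
apply: closed_approx => k H n Nn; apply/ler_addgt0Pr => eps eps0; rewrite add0r.
pose c := en n + 1.
have hn := en_ge0 n.
have c0 : 0 < c by rewrite /c; lra.
have [k' Pk' hk] := H (eps / c) (divr_gt0 eps0 c0).
have h1 := dot_approx n hk; rewrite !(dotC _ n) in h1.
have h2 := Pk' n Nn.
have h5 : eps / c * c = eps by field; rewrite gt_eqF.
have he : 0 < eps / c by apply: divr_gt0.
rewrite /c in h5; nra.
Qed.

Lemma Pol_cone y s k : 0 <= s -> Pol y k -> Pol y (s *: k).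
Proof. by move=> s0 Pk n Nn; rewrite dotZr; apply: mulr_ge0_le0 => //; apply: Pk. Qed.

Lemma Pol_add y k1 k2 : Pol y k1 -> Pol y k2 -> Pol y (k1 + k2).
Proof. by move=> h1 h2 n Nn; rewrite dotDr; have := h1 n Nn; have := h2 n Nn; lra. Qed.

Lemma Pol0 y : Pol y 0.
Proof. by move=> n _; rewrite dot0r. Qed.

Definition hseq : R^nat := fun k => k.+1%:R^-1.
Lemma hseq_gt0 k : 0 < hseq k.
Proof. by rewrite /hseq invr_gt0 ltr0n. Qed.
Lemma hseq_dec k : hseq k.+1 <= hseq k.
Proof. by rewrite /hseq lef_pV2 ?posrE ?ltr0n // ler_nat. Qed.
Lemma hseq_cvg : hseq @ \oo --> 0.
Proof. exact: cvg_harmonic. Qed.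

Lemma tangent_Pol y w : Om y -> clarke_tangent Om y w -> Pol y w.
Proof.
move=> Oy Tw n Nn.
have [vs [vcv Hvs]] := Tw hseq (fun=> y) hseq_gt0 hseq_dec hseq_cvg (fun=> Oy) (cvg_cst y).
rewrite leNgt; apply/negP => c0.
set c := dot n w in c0.
have hn := en_ge0 n; have hw := en_ge0 w; have et := eta_gt0.
pose g := Num.min 1 (c / (2 * (en n + 1))).
have g0 : 0 < g by rewrite lt_min ltr01 divr_gt0 //; lra.
have g1 : g <= 1 by rewrite ge_min lexx.
have g2 : g * (2 * (en n + 1)) <= c.
  by rewrite -ler_pdivlMr; [rewrite ge_min lexx orbT|lra].
pose tau := eta * c / ((en n + 1) * (en w + 1) ^+ 2).
have tau0 : 0 < tau by rewrite /tau divr_gt0 ?mulr_gt0 //; lra.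
have [k [hk1 hk2]] := filter_ex (filterI (en_cvg vcv g0) (real_cvg0 hseq_cvg tau0)).
rewrite /= in hk1 hk2.
set t := hseq k in hk2; have t0 : 0 < t := hseq_gt0 k.
set u := vs k in hk1.
have h := Nn _ (Hvs k); rewrite -/t -/u in h.
have ee : y + t *: u - y = t *: u by veq.
rewrite ee in h.
rewrite dotZr en2Z in h.
have h' : 2 * eta * dot n u <= en n * t * en2 u.
  have : t * (2 * eta * dot n u) <= t * (en n * t * en2 u) by nra.
  by rewrite ler_pM2l.
have hd := dot_approx n hk1; rewrite !(dotC _ n) -/c in hd.
have hu : en u <= en w + 1.
  by have := en_triangle (u - w) w; rewrite subrK => ?; lra.
have hu2 : en2 u <= (en w + 1) ^+ 2.
  by rewrite -en_sq; have := en_ge0 u; nra.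
have htau : tau * ((en n + 1) * (en w + 1) ^+ 2) = eta * c.
  by rewrite /tau; field; have := sqr_ge0 (en w + 1); nra.
have P0 : 0 < (en n + 1) * (en w + 1) ^+ 2.
  by rewrite mulr_gt0 // ?exprn_gt0 //; lra.
have ht : (en n + 1) * (en w + 1) ^+ 2 * t < eta * c.
  move: P0 htau; set P := (en n + 1) * (en w + 1) ^+ 2 => P0 htau; nra.
have hsq := en2_ge0 u; have hsq2 := sqr_ge0 (en w + 1).
have hgn : g * en n <= c / 2 by nra.
have hA : en n * t * en2 u <= (en n + 1) * (en w + 1) ^+ 2 * t.
  have : en n * en2 u <= (en n + 1) * (en w + 1) ^+ 2.
    by apply: ler_pM => //; lra.
  move=> hh; rewrite mulrAC; apply: ler_wpM2r => //; lra.
have hB : eta * c <= 2 * eta * dot n u by nra.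
lra.
Qed.

Lemma hseq_mono N k : (N <= k)%N -> hseq k <= hseq N.
Proof. by move=> h; rewrite /hseq lef_pV2 ?posrE ?ltr0n // ler_nat. Qed.

Lemma S1_closed : closed [set x : V | en x = 1].
Proof.
apply: closed_approx => k H /=; apply/eqP; rewrite eq_le; apply/andP; split;
  apply/ler_addgt0Pr => g g0; have [k' /= h1 h2] := H g g0;
  have := en_lip k k'; rewrite enB ler_norml => /andP[ha hb]; lra.
Qed.

Lemma S1_compact : compact [set x : V | en x = 1].
Proof.
have bS : \forall M \near +oo, forall x : V, [set x : V | en x = 1] x -> `|x| <= M.
  near=> M => x /= hx; apply: le_trans (mxn_le_en _) _; rewrite hx.
  near: M; apply: nbhs_pinfty_ge; exact: num_real.
exact: (bounded_closed_compact bS S1_closed).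
Unshelve. all: by end_near.
Qed.

Lemma Pol_osc y w : Om y -> Pol y w -> forall eps, 0 < eps ->
  exists2 del, 0 < del & forall z, Om z -> en (z - y) < del ->
    forall n, NN z n -> dot n w <= eps * en n.
Proof.
move=> Oy Pw eps eps0.
apply: contrapT => Hno.
have Hk : forall k : nat, exists ze : V * V,
    [/\ Om ze.1, en (ze.1 - y) < hseq k, NN ze.1 ze.2, en ze.2 = 1 & eps < dot ze.2 w].
  move=> k; apply: contrapT => nk; apply: Hno; exists (hseq k); first exact: hseq_gt0.
  move=> z Oz hz n Nn; rewrite leNgt; apply/negP => hlt; apply: nk.
  have nz : n != 0.
    by apply/eqP => n0; move: hlt; rewrite n0 dot0l en0 mulr0 ltxx.
  have enp := en_gt0 nz.
  exists (z, (en n)^-1 *: n); split => //=.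
  - by apply: NN_cone => //; rewrite invr_ge0 en_ge0.
  - exact: en_unit.
  - by rewrite dotZl mulrC ltr_pdivlMr.
have [f Hf] := choice Hk.
pose z k := (f k).1; pose e k := (f k).2.
have [ec [Sec clec]] : [set x : V | en x = 1] `&` cluster (e @ \oo) !=set0.
  have FS : \forall k \near \oo, en (e k) = 1.
    by apply: nearW => k; rewrite /e; case: (Hf k).
  exact: (@S1_compact (e @ \oo) _ FS).
rewrite /= in Sec.
have freq N g : 0 < g -> exists k, (N <= k)%N /\ en (e k - ec) < g.
  move=> g0.
  have := clec [set x | exists2 k, (N <= k)%N & x = e k] [set x | en (x - ec) < g].
  case.
  - by apply: filterS (nbhs_infty_ge N) => k hk; exists k.
  - exact: nbhs_en.
  by move=> x [[k hk ->] hb]; exists k.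
have hw := en_ge0 w; have et := eta_gt0.
have h1 : eps <= dot ec w.
  rewrite leNgt; apply/negP => hlt.
  pose g := (eps - dot ec w) / (en w + 1).
  have g0 : 0 < g by rewrite /g divr_gt0 //; lra.
  have [k [_ hk]] := freq 0%N g g0.
  have hd := dot_approx w (k := e k) (k' := ec) (e := g).
  rewrite enB in hd; have hd' := hd hk.
  have [_ _ _ _ hek] := Hf k; rewrite -/(e k) in hek.
  have hg : g * (en w + 1) = eps - dot ec w by rewrite /g; field; lra.
  nra.
have h2 : NN y ec.
  move=> y' Oy'; rewrite Sec mul1r; apply/ler_addgt0Pr => g g0.
  set a := y' - y.
  have ha := en_ge0 a; have ha2 : en2 a = en a ^+ 2 by rewrite en_sq.
  pose Kc := 2 * eta * (en a + 2) + 2 * en a + 1.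
  have Kc0 : 0 < Kc by rewrite /Kc; nra.
  pose gam := Num.min 1 (g / Kc).
  have gam0 : 0 < gam by rewrite lt_min ltr01 divr_gt0.
  have gam1 : gam <= 1 by rewrite ge_min lexx.
  have gam2 : gam * Kc <= g by rewrite -ler_pdivlMr // ge_min lexx orbT.
  have [N hN] := filter_ex (real_cvg0 hseq_cvg gam0).
  have [k [hkN hk]] := freq N gam gam0.
  have [Ozk hzk Nk ek1 _] := Hf k; rewrite -/(z k) -/(e k) in Ozk hzk Nk ek1.
  have hzy : en (z k - y) < gam.
    by apply: lt_le_trans hzk _; apply: le_trans (hseq_mono hkN) (ltW hN).
  have hN' := Nk y' Oy'; rewrite ek1 mul1r in hN'.
  set b := y' - z k in hN'.
  have eab : a = b + (z k - y) by rewrite /a /b; veq.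
  have hda : dot ec a = dot ec b + dot ec (z k - y) by rewrite eab dotDr.
  have hd1 : dot ec b <= dot (e k) b + gam * en b by apply: dot_approx.
  have hd2 : dot ec (z k - y) <= gam.
    have := CSabs ec (z k - y); rewrite Sec mul1r => hc.
    have := ler_norm (dot ec (z k - y)); lra.
  have hb : en b <= en a + gam.
    have := en_triangle a (- (z k - y)); rewrite enN.
    have -> : a + - (z k - y) = b by rewrite eab; veq.
    lra.
  have hb0 := en_ge0 b.
  have hb2 : en2 b <= en2 a + gam * (2 * en a + 1).
    rewrite -en_sq ha2; nra.
  have hgb : gam * en b <= gam * (en a + 1) by apply: ler_wpM2l; lra.
  have e2 : 0 <= 2 * eta by lra.
  have hd1' := ler_wpM2l e2 hd1; have hd2' := ler_wpM2l e2 hd2.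
  have hgb' := ler_wpM2l e2 hgb.
  rewrite /Kc in gam2; rewrite hda.
  nra.
by have := Pw ec h2; lra.
Qed.

Lemma H_step y w tk yk zk eps del :
  Om yk -> 0 < tk -> nearest Om (yk + tk *: w) zk ->
  (forall z, Om z -> en (z - y) < del -> forall n, NN z n -> dot n w <= eps * en n) ->
  0 <= eps ->
  en (yk - y) < del / 2 -> tk * (4 * (en w + 1)) < del ->
  en2 (w - tk^-1 *: (zk - yk)) * eta <= eps * en w * eta + 2 * tk * en w ^+ 3.
Proof.
move=> Oyk t0 nz Hdel eps0 hyk htk.
set u := w - tk^-1 *: (zk - yk).
have hs : tk *: u = tk *: w - (zk - yk).
  by rewrite /u scalerBr scalerA mulfV ?gt_eqF // scale1r.
have e1 : zk + tk *: u = yk + tk *: w by rewrite hs; veq.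
have [Ozk Hzk] := nz.
have nz' : nearest Om (zk + tk *: u) zk by rewrite e1.
have Nu : NN zk u := Mc_NN Ozk (prox_Mc t0 nz').
have hw := en_ge0 w; have hu0 := en_ge0 u; have et := eta_gt0.
have hu : en u <= en w.
  have := Hzk yk Oyk.
  have -> : yk + tk *: w - zk = tk *: u by rewrite hs; veq.
  have -> : yk + tk *: w - yk = tk *: w by veq.
  rewrite !enZ (ger0_norm (ltW t0)) => h.
  by move: h; rewrite ler_pM2l.
have hzk : zk - yk = tk *: (w - u) by rewrite scalerBr hs; veq.
have hd : en (zk - y) < del.
  have := en_tri3 zk yk y; rewrite hzk enZ (ger0_norm (ltW t0)).
  have := en_triangle w (- u); rewrite enN => h1 h2.
  have : tk * en (w - u) <= tk * (2 * en w) by apply: ler_wpM2l; lra.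
  lra.
have hdw : dot u w <= eps * en w.
  apply: le_trans (Hdel _ Ozk hd _ Nu) _; exact: ler_wpM2l.
have h := Nu yk Oyk.
have hyz : yk - zk = tk *: (u - w) by rewrite -opprB hzk -scalerN opprB.
rewrite hyz dotZr en2Z dotBr -en2_dot in h.
have huw : en2 (u - w) <= (2 * en w) ^+ 2.
  rewrite -en_sq; have := en_tri3 u 0 w; rewrite subr0 sub0r enN.
  have := en_ge0 (u - w); nra.
have h2 : 2 * eta * (en2 u - dot u w) <= en u * tk * en2 (u - w).
  have : tk * (2 * eta * (en2 u - dot u w)) <= tk * (en u * tk * en2 (u - w)).
    by move: h; rewrite -mulrA; nra.
  by rewrite ler_pM2l.
have h3 : en u * tk * en2 (u - w) <= en w * tk * (2 * en w) ^+ 2.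
  apply: ler_pM; [|exact: en2_ge0| |exact: huw].
    by apply: mulr_ge0 => //; lra.
  by apply: ler_wpM2r; lra.
have h4 : eps * en w * eta >= dot u w * eta by apply: ler_wpM2r; lra.
nra.
Qed.

Lemma Pol_tangent y w : Om y -> Pol y w -> clarke_tangent Om y w.
Proof.
move=> Oy Pw t xs t0 tdec tcv Oxs xcv.
have Hz : forall k, exists zk, nearest Om (xs k + t k *: w) zk.
  by move=> k; apply: nearest_ex Om_closed (Oxs k).
have [z Hz'] := choice Hz.
exists (fun k => (t k)^-1 *: (z k - xs k)); split; last first.
  move=> k; have -> : xs k + t k *: ((t k)^-1 *: (z k - xs k)) = z k.
    by rewrite scalerA mulfV ?gt_eqF // scale1r addrC subrK.
  by case: (Hz' k).
apply: cvg_en => e e0.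
have hw := en_ge0 w; have et := eta_gt0.
pose eps := e ^+ 2 / (2 * (en w + 1)).
have eps0 : 0 < eps by rewrite divr_gt0 ?exprn_gt0 //; lra.
have [del del0 Hdel] := Pol_osc Oy Pw eps0.
pose tau := e ^+ 2 * eta / (4 * (en w ^+ 3 + 1)).
have hw3 : 0 <= en w ^+ 3 by apply: exprn_ge0.
have tau0 : 0 < tau by rewrite divr_gt0 ?mulr_gt0 ?exprn_gt0 //; lra.
pose tau2 := del / (4 * (en w + 1)).
have tau20 : 0 < tau2 by rewrite divr_gt0 //; lra.
have del2 : 0 < del / 2 by rewrite divr_gt0.
near=> k.
have hk1 : t k < tau.
  near: k. exact: (real_cvg0 tcv tau0).
have hk2 : t k < tau2.
  near: k. exact: (real_cvg0 tcv tau20).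
have hk3 : en (xs k - y) < del / 2.
  near: k. exact: (en_cvg xcv del2).
have tk0 := t0 k.
have htk : t k * (4 * (en w + 1)) < del.
  by move: hk2; rewrite /tau2 ltr_pdivlMr //; lra.
have hs := H_step (Oxs k) tk0 (Hz' k) Hdel (ltW eps0) hk3 htk.
have -> : (t k)^-1 *: (z k - xs k) - w = - (w - (t k)^-1 *: (z k - xs k)) by rewrite opprB.
rewrite enN; move: hs; set u := w - (t k)^-1 *: (z k - xs k) => hs.
have h1 : eps * en w <= e ^+ 2 / 2.
  have -> : eps * en w = e ^+ 2 / 2 * (en w / (en w + 1)) by rewrite /eps; field; lra.
  rewrite -[X in _ <= X]mulr1; apply: ler_wpM2l; first by rewrite divr_ge0 ?sqr_ge0.
  by rewrite ler_pdivrMr; lra.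
have h2 : t k * (4 * (en w ^+ 3 + 1)) < e ^+ 2 * eta.
  by move: hk1; rewrite /tau ltr_pdivlMr //; lra.
have h3 : en2 u * eta < e ^+ 2 * eta.
  have := ler_wpM2r (ltW et) h1; nra.
have h4 : en2 u < e ^+ 2 by move: h3; rewrite ltr_pM2r.
rewrite -en_sq in h4; have := en_ge0 u; nra.
Unshelve. all: by end_near.
Qed.

Lemma T_eq x : Om x -> clarke_tangent Om x = Pol x.
Proof.
move=> Ox; apply/seteqP; split => k; [exact: tangent_Pol | exact: Pol_tangent].
Qed.

Lemma T_cone x : Om x -> forall s k, 0 <= s -> clarke_tangent Om x k ->
  clarke_tangent Om x (s *: k).
Proof. by move=> Ox s k s0; rewrite T_eq //; apply: Pol_cone. Qed.

Lemma proj_nearest x v : Om x ->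
  nearest (clarke_tangent Om x) v (proj_tangent Om x v).
Proof.
move=> Ox; rewrite /proj_tangent; apply: xgetPex.
apply: (@nearest_ex (clarke_tangent Om x) v 0); rewrite T_eq //; [exact: Pol_closed | exact: Pol0].
Qed.

Lemma main_conv x : Om x -> convex_fun (fun v => en (proj_tangent Om x v) ^+ 2).
Proof.
move=> Ox u w s /andP[s0 s1].
rewrite !en_sq !en2_dot.
set v := s *: u + (1 - s) *: w.
have nv := proj_nearest v Ox.
set k := proj_tangent Om x v in nv *.
have Tk : clarke_tangent Om x k by case: nv.
have e := cone_nearest (T_cone Ox) nv.
have hu := cone_value (T_cone Ox) (proj_nearest u Ox) Tk.
have hw := cone_value (T_cone Ox) (proj_nearest w Ox) Tk.
have ev : dot v k = s * dot u k + (1 - s) * dot w k by rewrite /v dot_lin.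
have s1' : 0 <= 1 - s by lra.
have hu' := ler_wpM2l s0 hu; have hw' := ler_wpM2l s1' hw.
nra.
Qed.

Lemma arith_final (a pp wp wq qq vp wvp del1 enp env eps G PP : R) :
  G = pp - a -> vp = pp -> wp = vp + wvp -> - (del1 * enp) <= wvp ->
  wq <= (env + 1) * eps -> del1 * enp <= G / 8 -> (env + 1) * eps <= G / 8 ->
  0 <= qq -> 2 * wp - 2 * wq - pp + qq <= PP -> 0 < G -> a < PP.
Proof. move=> *; lra. Qed.

Lemma arith_b (env eps G : R) : eps * (8 * (env + 1)) <= G -> (env + 1) * eps <= G / 8.
Proof. move=> h; lra. Qed.

Lemma arith_a (del1 enp G : R) : 0 < del1 -> 0 <= enp ->
  del1 * (8 * (enp + 1)) <= G -> del1 * enp <= G / 8.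
Proof. move=> h0 h1 h; nra. Qed.

Lemma arith_q (q e : R) : 0 <= q -> q * q <= e * q -> 0 < e -> q <= e.
Proof. move=> h0 h h1; nra. Qed.

Lemma arith_cs (x c b : R) : `|x| <= c -> c <= b -> - b <= x /\ x <= b.
Proof. by rewrite ler_norml => /andP[h1 h2] h; split; lra. Qed.

Lemma main_lsc :
  lsc_on (Om `*` setT) (fun xv : V * V => en (proj_tangent Om xv.1 xv.2) ^+ 2).
Proof.
move=> [x v] [/= Ox _] a.
have np := proj_nearest v Ox.
move: np; set p := proj_tangent Om x v => np.
rewrite en_sq en2_dot => ha.
have Tp : clarke_tangent Om x p by case: np.
have Pp := tangent_Pol Ox Tp.
have hp := cone_nearest (T_cone Ox) np.
have [G hG] : exists G, G = dot p p - a by eexists.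
have G0 : 0 < G by rewrite hG subr_gt0.
have hv := en_ge0 v; have hpn := en_ge0 p.
have [eps [eps0 eps2]] : exists eps, 0 < eps /\ eps * (8 * (en v + 1)) <= G.
  exists (G / (8 * (en v + 1))); have h8 : 0 < 8 * (en v + 1).
    by apply: mulr_gt0 => //; apply: ltr_wpDl.
  by split; [apply: divr_gt0|rewrite divfK ?gt_eqF].
have [del del0 Hdel] := Pol_osc Ox Pp eps0.
have [del1 [d10 [d11 [d12 d13]]]] : exists del1, [/\ 0 < del1, del1 <= del, del1 <= 1 &
    del1 * (8 * (en p + 1)) <= G].
  have h8 : 0 < 8 * (en p + 1) by apply: mulr_gt0 => //; apply: ltr_wpDl.
  exists (Num.min (Num.min del 1) (G / (8 * (en p + 1)))); split.
  - by rewrite !lt_min del0 ltr01 divr_gt0.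
  - by rewrite !ge_min lexx.
  - by rewrite !ge_min lexx orbT.
  - by rewrite -ler_pdivlMr // ge_min lexx orbT.
exists ([set y : V | en (y - x) < del1] `*` [set w : V | en (w - v) < del1]).
  change (filter_prod (nbhs x) (nbhs v)
    ([set y : V | en (y - x) < del1] `*` [set w : V | en (w - v) < del1])).
  exists ([set y : V | en (y - x) < del1], [set w : V | en (w - v) < del1]) => //=.
  by split; apply: nbhs_en.
move=> [y w] [/= hy hw] [/= Oy _].
have [q nq] := nearest_ex p (@NN_closed y) (NN0 y).
have NNc : forall s k, 0 <= s -> NN y k -> NN y (s *: k).
  by move=> s k s0 Nk; apply: NN_cone.
have hq := cone_nearest NNc nq.
have Pk : Pol y (p - q).
  move=> n Nn; rewrite dotC; apply: (convex_nearest NNc _ nq Nn).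
  by move=> k1 k2; apply: NN_add.
have Tk := Pol_tangent Oy Pk.
have nw := proj_nearest w Oy.
move: nw; set P := proj_tangent Om y w => nw.
rewrite en_sq en2_dot.
have hval := cone_value (T_cone Oy) nw Tk.
have Nq : NN y q by case: nq.
have hqe : dot q p <= eps * en q.
  exact: (Hdel y Oy (lt_le_trans hy d11) q Nq).
have hqn : en q <= eps.
  apply: arith_q => //; first exact: en_ge0.
  by rewrite en_sqd -hq dotC.
have hwp : dot w p = dot v p + dot (w - v) p by rewrite dotBl; ring.
have hwv' : - (del1 * en p) <= dot (w - v) p.
  have [h _] := arith_cs (CSabs (w - v) p) (ler_wpM2r hpn (ltW hw)); exact: h.
have hen : en w <= en v + 1.
  have := en_triangle (w - v) v; rewrite subrK => h1.
  by apply: le_trans h1 _; rewrite addrC lerD2l; apply: le_trans (ltW hw) d12.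
have hwq : dot w q <= (en v + 1) * eps.
  have h3 : en w * en q <= (en v + 1) * eps by apply: ler_pM => //; apply: en_ge0.
  by have [_ h] := arith_cs (CSabs w q) h3.
have hexp : 2 * dot w (p - q) - dot (p - q) (p - q) =
    2 * dot w p - 2 * dot w q - dot p p + dot q q.
  rewrite !dotBr !dotBl (dotC q p) hq; ring.
rewrite hexp in hval.
apply: (arith_final hG hp hwp hwv' hwq (arith_a d10 hpn d13) (arith_b eps2) _ hval G0).
by rewrite -en2_dot en2_ge0.
Qed.

End Eucl.

Unset Implicit Arguments.
Theorem proposition2p2 (R : realType) (d : nat) (Om : set 'rV[R]_d) (eta : R) :
  0 < eta -> closed Om -> prox_regular Om eta ->
  lsc_on (Om `*` setT)
    (fun xv : 'rV[R]_d * 'rV[R]_d => enorm (proj_tangent Om xv.1 xv.2) ^+ 2)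
  /\ (forall x, Om x -> convex_fun (fun v => enorm (proj_tangent Om x v) ^+ 2)).
Proof.
move=> e0 cl pr; split.
  exact: (main_lsc e0 cl pr).
by move=> x Ox; exact: (main_conv e0 cl pr Ox).
Qed.
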